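(* Let $A$ be a left brace and let $B=\{a\in A:\ (b+c)a=ba+ca-a \text{ for all } b,c\in A\}$. Then $B=\{a\in A: a^{-1}(b+c)a=a^{-1}ba+a^{-1}ca \text{ for all } b,c\in A\}$, and $B$ is a subbrace of $A$ (a subgroup of both $(A,+)$ and $(A,\cdot)$) which is a two-sided brace.
   Context: A left brace is a set $A$ with two operations $+,\cdot$ such that $(A,+)$ is an abelian group, $(A,\cdot)$ is a group and $a(b+c)+a=ab+ac$ for all $a,b,c$. A two-sided brace is a left brace that additionally satisfies $(b+c)a+a=ba+ca$ for all $a,b,c$. *)

(* Defs.v *)
Record LeftBrace := {
  carrier :> Type;
  badd : carrier -> carrier -> carrier;
  bzero : carrier;
  bopp : carrier -> carrier;
  bmul : carrier -> carrier -> carrier;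
  bone : carrier;
  binv : carrier -> carrier;
  badd_assoc : forall x y z, badd x (badd y z) = badd (badd x y) z;
  badd_comm : forall x y, badd x y = badd y x;
  badd_0l : forall x, badd bzero x = x;
  badd_Nl : forall x, badd (bopp x) x = bzero;
  bmul_assoc : forall x y z, bmul x (bmul y z) = bmul (bmul x y) z;
  bmul_1l : forall x, bmul bone x = x;
  bmul_1r : forall x, bmul x bone = x;
  bmul_Vl : forall x, bmul (binv x) x = bone;
  bmul_Vr : forall x, bmul x (binv x) = bone;
  brace_compat : forall a b c,
    badd (bmul a (badd b c)) a = badd (bmul a b) (bmul a c)
}.

Arguments badd {_}. Arguments bzero {_}. Arguments bopp {_}.
Arguments bmul {_}. Arguments bone {_}. Arguments binv {_}.

Definition inB (A : LeftBrace) (a : A) : Prop :=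
  forall b c : A, bmul (badd b c) a = badd (badd (bmul b a) (bmul c a)) (bopp a).

Definition inB' (A : LeftBrace) (a : A) : Prop :=
  forall b c : A, bmul (bmul (binv a) (badd b c)) a
                  = badd (bmul (bmul (binv a) b) a) (bmul (bmul (binv a) c) a).

Definition is_subbrace (A : LeftBrace) (P : A -> Prop) : Prop :=
  P bzero /\ (forall x y, P x -> P y -> P (badd x y)) /\ (forall x, P x -> P (bopp x)) /\
  P bone /\ (forall x y, P x -> P y -> P (bmul x y)) /\ (forall x, P x -> P (binv x)).

Definition two_sided_on (A : LeftBrace) (P : A -> Prop) : Prop :=
  forall a b c : A, P a -> P b -> P c ->
    badd (bmul (badd b c) a) a = badd (bmul b a) (bmul c a).

(* Main.v *)
Require Import Defs.
From HB Require Import structures.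
From mathcomp Require Import all_boot all_algebra ssrAC.
From mathcomp Require Import boolp.
Import GRing.Theory.

Definition T (A : LeftBrace) : Type := carrier A.
HB.instance Definition _ (A : LeftBrace) := gen_eqMixin (T A).
HB.instance Definition _ (A : LeftBrace) := gen_choiceMixin (T A).
HB.instance Definition _ (A : LeftBrace) := GRing.isZmodule.Build (T A)
  (@badd_assoc A) (@badd_comm A) (@badd_0l A) (@badd_Nl A).

Local Open Scope ring_scope.

Lemma z2 (V : zmodType) (P Q R S a b y z : V) :
  (P + Q - a) + (R + S - b) - (y + z) = (P + R - y) + (Q + S - z) - (a + b).
Proof.
by rewrite !opprD !addrA [LHS](ACl (1*4*7*2*5*8*3*6)).
Qed.
Lemma z3 (V : zmodType) (P Q a y z : V) :
  (y + z) + (y + z) - (P + Q - a) = (y + y - P) + (z + z - Q) - - a.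
Proof.
by rewrite !opprD !opprK !addrA [LHS](ACl (1*3*5*2*4*6*7)).
Qed.
Lemma z1 (V : zmodType) (X Y b R : V) :
  X + Y - b + (b + b - R) - b = X + Y - R.
Proof.
by rewrite !addrA [LHS](ACl (1*2*3*4*7*5*6)) /= !addrNK.
Qed.

Section Brace.
Variable A : LeftBrace.
Local Notation V := (T A).
Local Notation "x ** y" := (@bmul A (x : V) (y : V) : V) (at level 40, left associativity).
Local Notation "'inv' x" := (@binv A (x : V) : V) (at level 8).

Definition inBm (a : V) := forall b c : V, (b + c) ** a = b ** a + c ** a - a.
Definition inBm' (a : V) := forall b c : V,
  inv a ** (b + c) ** a = inv a ** b ** a + inv a ** c ** a.

Lemma inB_m a : inB A a <-> inBm a.
Proof. split; intros H b c; exact (H b c). Qed.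
Lemma inB'_m a : inB' A a <-> inBm' a.
Proof. split; intros H b c; exact (H b c). Qed.

Lemma compat (a b c : V) : a ** (b + c) + a = a ** b + a ** c.
Proof. exact (brace_compat A a b c). Qed.

Lemma m0 (a : V) : a ** 0 = a.
Proof.
have := compat a 0 0; rewrite addr0 => /addrI; done.
Qed.

Lemma one0 : (bone : V) = 0.
Proof. by rewrite -(m0 bone) bmul_1l. Qed.

Lemma lamD (a x y : V) : a ** (x + y) = a ** x + a ** y - a.
Proof. by rewrite -compat addrK. Qed.

Lemma lamN (a x : V) : a ** (- x) = a + a - a ** x.
Proof.
have := lamD a x (- x); rewrite subrr m0 => H.
move/eqP: H; rewrite eq_sym subr_eq => /eqP <-; by rewrite addrC addKr.
Qed.

Lemma inB_to (a : V) : inBm a -> inBm' a.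
Proof.
move=> H b c.
rewrite -!bmul_assoc H !lamD lamN bmul_Vl one0 subr0.
rewrite !bmul_assoc.
set X := inv a ** b ** a; set Y := inv a ** c ** a; set i := inv a.
by rewrite addrA addrNK addrK.
Qed.

Lemma inB_from (a : V) : inBm' a -> inBm a.
Proof.
move=> H b c.
have E : forall x : V, x ** a = a ** (inv a ** x ** a).
  by move=> x; rewrite !bmul_assoc bmul_Vr bmul_1l.
by rewrite E H lamD -!E.
Qed.

Lemma rmulN (a x : V) : inBm a -> (- x) ** a = a + a - x ** a.
Proof.
move=> H; have := H x (- x); rewrite subrr.
have -> : (0 : V) ** a = a by rewrite -one0 bmul_1l.
move/eqP; rewrite eq_sym subr_eq => /eqP <-; by rewrite addrC addKr.
Qed.

Lemma inv_inv (a : V) : inv (inv a) = a.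
Proof.
by rewrite -[LHS]bmul_1r -(bmul_Vl _ a) bmul_assoc bmul_Vl bmul_1l.
Qed.

Lemma sub_brace :
  inBm 0 /\ (forall x y, inBm x -> inBm y -> inBm (x + y)) /\
  (forall x, inBm x -> inBm (- x)) /\ inBm bone /\
  (forall x y, inBm x -> inBm y -> inBm (x ** y)) /\
  (forall x, inBm x -> inBm (inv x)).
Proof.
have B0 : inBm 0 by move=> b c; rewrite !m0 subr0.
split; first exact B0.
split.
  move=> a b Ha Hb y z; rewrite !lamD Ha Hb; exact: z2.
split.
  move=> a Ha y z; rewrite !lamN Ha; exact: z3.
split; first by rewrite one0.
split.
  move=> a b Ha Hb y z.
  rewrite !bmul_assoc Ha !Hb (rmulN _ _ Hb); exact: z1.
move=> a Ha; apply inB_from => y z.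
have Ha' := inB_to _ Ha.
rewrite inv_inv.
set u := a ** y ** inv a; set v := a ** z ** inv a.
have Ey : y = inv a ** u ** a.
  by rewrite /u !bmul_assoc bmul_Vl bmul_1l -bmul_assoc bmul_Vl bmul_1r.
have Ez : z = inv a ** v ** a.
  by rewrite /v !bmul_assoc bmul_Vl bmul_1l -bmul_assoc bmul_Vl bmul_1r.
rewrite Ey Ez -Ha' -/u -/v.
by rewrite !bmul_assoc bmul_Vr bmul_1l -bmul_assoc bmul_Vr bmul_1r.
Qed.

Lemma ts (a b c : V) : inBm a -> (b + c) ** a + a = b ** a + c ** a.
Proof. by move=> Ha; rewrite Ha subrK. Qed.

End Brace.

Theorem mainTheorem11 (A : LeftBrace) :
  (forall a : A, inB A a <-> inB' A a) /\
  is_subbrace A (inB A) /\ two_sided_on A (inB A).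
Proof.
split.
  move=> a; rewrite inB_m inB'_m; split; [exact: inB_to | exact: inB_from].
split.
  have [H0 [HD [HN [H1 [HM HV]]]]] := sub_brace A.
  split; first by apply/inB_m.
  split; first by move=> x y /inB_m Hx /inB_m Hy; apply/inB_m; exact: HD.
  split; first by move=> x /inB_m Hx; apply/inB_m; exact: HN.
  split; first by apply/inB_m.
  split; first by move=> x y /inB_m Hx /inB_m Hy; apply/inB_m; exact: HM.
  by move=> x /inB_m Hx; apply/inB_m; exact: HV.
move=> a b c /inB_m Ha _ _.
exact: (ts _ _ b c Ha).
Qed.
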